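(* Let $P$ be a nonzero $n\times n$ real symmetric positive semidefinite matrix and let $\theta$ satisfy $0<\theta<\lambda_1(P)^{-1}$. Then: (1) the function $\vartheta\mapsto\gamma(\vartheta,P)$ is monotone increasing on $[0,\lambda_1(P)^{-1})$; (2) $\gamma(\theta,P)>0$; (3) if $Q$ is a symmetric positive semidefinite matrix with $P\succeq Q$, then $\gamma(\theta,P)\ge\gamma(\theta,Q)$.
   Context: $\lambda_1(P)$ is the largest eigenvalue of $P$; $\succeq$ is the Loewner order. For a symmetric matrix $P$ and real $\theta$ with $I-\theta P\succ0$, $\gamma(\theta,P)=\tfrac12\big[\log\det(I-\theta P)+\mathrm{tr}((I-\theta P)^{-1})-n\big]$. *)

(* Defs.v *)
From HB Require Import structures.
From mathcomp Require Import all_boot all_order all_algebra.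
From mathcomp Require Import all_classical all_reals all_analysis.
Set Implicit Arguments. Unset Strict Implicit. Unset Printing Implicit Defensive.
Import Order.TTheory GRing.Theory Num.Theory.
Local Open Scope ring_scope.
Local Open Scope classical_set_scope.

Definition sym_mx (R : realType) (n : nat) (P : 'M[R]_n) : Prop := P^T = P.

Definition psd (R : realType) (n : nat) (P : 'M[R]_n) : Prop :=
  forall v : 'cV[R]_n, 0 <= (v^T *m P *m v) 0 0.

Definition loewner_ge (R : realType) (n : nat) (P Q : 'M[R]_n) : Prop :=
  psd (P - Q).

Definition lambda1 (R : realType) (n : nat) (P : 'M[R]_n) : R :=
  sup [set a : R | eigenvalue P a].

Definition gamma (R : realType) (n : nat) (theta : R) (P : 'M[R]_n) : R :=
  let A := 1%:M - theta *: P in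
  (ln (\det A) + \tr (invmx A) - n%:R) / 2.

(* Main.v *)
Require Import Defs.
From HB Require Import structures.
From mathcomp Require Import all_boot all_order all_algebra.
From mathcomp Require Import all_classical all_reals all_analysis.
From mathcomp Require Import complex.
From mathcomp Require Import ring.
Import Order.TTheory GRing.Theory Num.Theory.
Local Open Scope ring_scope.

Set Implicit Arguments. Unset Strict Implicit. Unset Printing Implicit Defensive.
Local Open Scope sesquilinear_scope.

Section Gen.
Variable C : numClosedFieldType.

Definition qf n (M : 'M[C]_n) (u : 'rV[C]_n) : C := (u *m M *m u ^t*) 0 0.

Lemma unitary_l n (U : 'M[C]_n) : U \is unitarymx -> U ^t* *m U = 1%:M.
Proof. by move=> uU; rewrite -invmx_unitary // mulVmx // unitarymx_unit. Qed.

Lemma unitary_r n (U : 'M[C]_n) : U \is unitarymx -> U *m U ^t* = 1%:M.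
Proof. by move=> /unitarymxP. Qed.

Lemma herm_decomp n (H : 'M[C]_n) : H \is hermsymmx ->
  exists U : 'M[C]_n, exists d : 'rV[C]_n,
    [/\ U \is unitarymx, (forall j, d 0 j \is Num.real) &
        H = U ^t* *m diag_mx d *m U].
Proof.
move=> hH; exists (spectralmx H), (spectral_diag H); split.
- exact: spectral_unitarymx.
- by move=> j; have /mxOverP := hermitian_spectral_diag_real hH; apply.
- have /orthomx_spectralP {1}-> := hermitian_normalmx hH.
  by rewrite invmx_unitary // spectral_unitarymx.
Qed.

Lemma qf_diag_mx n (d : 'rV[C]_n) (y : 'rV[C]_n) :
  qf (diag_mx d) y = \sum_j d 0 j * `|y 0 j| ^+ 2.
Proof.
rewrite /qf mul_mx_diag mxE; apply: eq_bigr => j _.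
by rewrite !mxE normCK mulrCA mulrA.
Qed.

Lemma qf_decomp n (U : 'M[C]_n) (d : 'rV[C]_n) (u : 'rV[C]_n) :
  qf (U ^t* *m diag_mx d *m U) u = qf (diag_mx d) (u *m U ^t*).
Proof.
rewrite /qf !mulmxA; congr (_ 0 0); rewrite -!mulmxA; congr (_ *m _).
by rewrite trmx_mul map_mxM trmxCK.
Qed.


Lemma qf1 n (u : 'rV[C]_n) : qf 1%:M u = \sum_j `|u 0 j| ^+ 2.
Proof.
rewrite -diag_const_mx qf_diag_mx; apply: eq_bigr => j _; by rewrite mxE mul1r.
Qed.

Lemma decomp1 n (U : 'M[C]_n) : U \is unitarymx ->
  U ^t* *m diag_mx (const_mx 1) *m U = 1%:M.
Proof. by move=> uU; rewrite diag_const_mx mulmx1 unitary_l. Qed.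

Lemma qf1_unitary n (U : 'M[C]_n) u : U \is unitarymx ->
  qf 1%:M (u *m U ^t*) = qf 1%:M u.
Proof. by move=> uU; rewrite -{2}(decomp1 uU) qf_decomp diag_const_mx. Qed.

Lemma qf_row n (U : 'M[C]_n) (d : 'rV[C]_n) j : U \is unitarymx ->
  qf (U ^t* *m diag_mx d *m U) (row j U) = d 0 j.
Proof.
move=> uU; rewrite qf_decomp -row_mul unitary_r // row1 qf_diag_mx.
rewrite (bigD1 j) //= big1 ?addr0.
  by rewrite !mxE !eqxx normr1 expr1n mulr1.
move=> k kj; rewrite !mxE eqxx /= (negbTE kj) normr0 expr0n mulr0 //.
Qed.

Lemma qf1_row n (U : 'M[C]_n) j : U \is unitarymx -> qf 1%:M (row j U) = 1.
Proof. by move=> uU; rewrite -{1}(decomp1 uU) qf_row // mxE. Qed.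

Lemma qfD n (M N : 'M[C]_n) u : qf (M + N) u = qf M u + qf N u.
Proof. by rewrite /qf mulmxDr mulmxDl mxE. Qed.

Lemma qfN n (M : 'M[C]_n) u : qf (- M) u = - qf M u.
Proof. by rewrite /qf mulmxN mulNmx mxE. Qed.

Lemma qfB n (M N : 'M[C]_n) u : qf (M - N) u = qf M u - qf N u.
Proof. by rewrite qfD qfN. Qed.

Lemma qfZ n (M : 'M[C]_n) a u : qf (a *: M) u = a * qf M u.
Proof. by rewrite /qf -scalemxAr -scalemxAl mxE. Qed.

Lemma qf1_ge0 n (u : 'rV[C]_n) : 0 <= qf 1%:M u.
Proof. by rewrite qf1 sumr_ge0 // => j _; rewrite exprn_ge0. Qed.

Lemma qf1_gt0 n (u : 'rV[C]_n) : u != 0 -> 0 < qf 1%:M u.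
Proof.
move=> u0; rewrite lt_def qf1_ge0 andbT; apply: contra u0 => /eqP.
rewrite qf1 => /eqP; rewrite psumr_eq0 => [/allP H|j _]; last exact: exprn_ge0.
apply/eqP/rowP => j; have := H j (mem_index_enum j).
by rewrite /= sqrf_eq0 normr_eq0 !mxE => /eqP.
Qed.

Lemma qf_diag_ge0 n (d : 'rV[C]_n) y : (forall j, 0 <= d 0 j) ->
  0 <= qf (diag_mx d) y.
Proof.
by move=> h; rewrite qf_diag_mx sumr_ge0 // => j _; rewrite mulr_ge0 ?exprn_ge0.
Qed.

Lemma qf_diag_le n (d : 'rV[C]_n) y m : (forall j, d 0 j <= m) ->
  qf (diag_mx d) y <= m * qf 1%:M y.
Proof.
move=> h; rewrite qf_diag_mx qf1 mulr_sumr; apply: ler_sum => j _.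
by rewrite ler_wpM2r ?exprn_ge0.
Qed.

Lemma qf_diag_ge n (d : 'rV[C]_n) y m : (forall j, m <= d 0 j) ->
  m * qf 1%:M y <= qf (diag_mx d) y.
Proof.
move=> h; rewrite qf_diag_mx qf1 mulr_sumr; apply: ler_sum => j _.
by rewrite ler_wpM2r ?exprn_ge0.
Qed.

Lemma det_decomp n (U : 'M[C]_n) (d : 'rV[C]_n) : U \is unitarymx ->
  \det (U ^t* *m diag_mx d *m U) = \prod_j d 0 j.
Proof.
move=> uU; rewrite !det_mulmx mulrC mulrA -det_mulmx unitary_r // det1 mul1r.
exact: det_diag.
Qed.

Lemma inv_unique n (A B : 'M[C]_n) : A *m B = 1%:M -> invmx A = B.
Proof.
move=> AB; have [uA _] := mulmx1_unit AB.
by rewrite -[RHS]mul1mx -(mulVmx uA) -mulmxA AB mulmx1.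
Qed.

Lemma inv_decomp n (U : 'M[C]_n) (d : 'rV[C]_n) : U \is unitarymx ->
  (forall j, d 0 j != 0) ->
  invmx (U ^t* *m diag_mx d *m U) = U ^t* *m diag_mx (\row_j (d 0 j)^-1) *m U.
Proof.
move=> uU d0; apply: inv_unique.
rewrite -!mulmxA [U *m (U ^t* *m _)]mulmxA unitary_r // mul1mx.
rewrite [diag_mx d *m _]mulmxA mulmx_diag.
have -> : (\row_j (d 0 j * (\row_j (d 0 j)^-1) 0 j)) = const_mx 1.
  by apply/rowP => j; rewrite !mxE mulfV.
by rewrite diag_const_mx mul1mx unitary_l.
Qed.

Lemma tr_diag_mul n (d : 'rV[C]_n) (M : 'M[C]_n) :
  \tr (diag_mx d *m M) = \sum_j d 0 j * M j j.
Proof. by rewrite /mxtrace; apply: eq_bigr => j _; rewrite mul_diag_mx mxE. Qed.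

Lemma qf_rowE n (A M : 'M[C]_n) j : qf M (row j A) = (A *m M *m A ^t*) j j.
Proof.
rewrite /qf -row_mul !mxE; apply: eq_bigr => k _; by rewrite !mxE.
Qed.


Lemma qf_conj n (G M : 'M[C]_n) u : qf (G *m M *m G ^t*) u = qf M (u *m G).
Proof. by rewrite /qf trmx_mul map_mxM !mulmxA. Qed.

End Gen.

Section Real.
Variable R : realType.
Local Notation C := R[i].
Local Notation iota := (real_complex R).

Definition mC n (M : 'M[R]_n) : 'M[C]_n := map_mx iota M.
Definition Phi n (M : 'M[R]_n) : R := ln (\det M) + \tr (invmx M).

Lemma nnegC (z : C) : 0 <= z -> z = (complex.Re z)%:C%C.
Proof. by case: z => a b; rewrite lecE => /andP[h _]; move: h => /= /eqP ->. Qed.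

Lemma conjCR (x : R) : (iota x)^* = iota x.
Proof.
apply: conj_Creal; rewrite realE.
have : (0 <= x) || (x <= 0) by rewrite -realE num_real.
by rewrite -(lecR 0 x) -(lecR x 0) /=.
Qed.

Lemma mC_tC n (M : 'M[R]_n) : M^T = M -> (mC M) ^t* = mC M.
Proof.
move=> sM; apply/matrixP => i j; rewrite !mxE conjCR.
by rewrite -[in RHS]sM mxE.
Qed.

Lemma mC_herm n (M : 'M[R]_n) : M^T = M -> mC M \is hermsymmx.
Proof. by move=> sM; apply/is_hermitianmxP; rewrite expr0 scale1r mC_tC. Qed.

Lemma mC_det n (M : 'M[R]_n) : \det (mC M) = iota (\det M).
Proof. exact: det_map_mx. Qed.

Lemma mC_tr n (M : 'M[R]_n) : \tr (mC M) = iota (\tr M).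
Proof. by rewrite /mxtrace rmorph_sum; apply: eq_bigr => j _; rewrite mxE. Qed.

Lemma mC_inv n (M : 'M[R]_n) : invmx (mC M) = mC (invmx M).
Proof. by rewrite /mC map_invmx. Qed.

Lemma ln_prod (I : finType) (F : I -> R) : (forall i, 0 < F i) ->
  ln (\prod_i F i) = \sum_i ln (F i).
Proof.
move=> Fp.
have := @big_ind2 R R (fun p s => 0 < p /\ ln p = s) 1 (@GRing.mul R) 0 (@GRing.add R)
  _ _ _ (index_enum I) (fun _ => true) F (fun i => ln (F i)).
case.
- by rewrite ln1.
- move=> x1 x2 y1 y2 [x0 <-] [y0 <-]; split; first exact: mulr_gt0.
  by rewrite lnM.
- by move=> i _; split.
by [].
Qed.

Lemma key (c g : R) : 0 < c -> c <= 1 -> 1 <= g ->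
  0 <= ln c + g * (c^-1 - 1) /\ (c < 1 -> 0 < ln c + g * (c^-1 - 1)).
Proof.
move=> c0 c1 g1; set x := c^-1 - 1.
have x0 : 0 <= x by rewrite subr_ge0 invf_ge1.
have lnc : ln c = - ln (1 + x) by rewrite /x addrC subrK lnV ?opprK.
have gx : x <= g * x by rewrite ler_peMl.
split.
  rewrite lnc; apply: (le_trans _ (lerD (lexx _) gx)).
  by rewrite addrC subr_ge0 le_ln1Dx // (lt_le_trans _ x0) // ltrN10.
move=> cl1; have xp : 0 < x by rewrite subr_gt0 invf_gt1.
rewrite lnc; apply: (lt_le_trans _ (lerD (lexx _) gx)).
rewrite addrC subr_gt0 -ltr_expR lnK ?expR_gt1Dx ?gt_eqF //.
by apply: addr_gt0.
Qed.


Lemma main n (A B : 'M[R]_n) : A^T = A -> B^T = B ->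
  (forall u, u != 0 -> 0 < qf (mC A) u) ->
  (forall u, qf (mC A) u <= qf (mC B) u) ->
  (forall u, qf (mC B) u <= qf 1%:M u) ->
  Phi B <= Phi A /\ (A != B -> Phi B < Phi A).
Proof.
move=> sA sB h1 h2 h3.
have [V [b [uV _ eB]]] := herm_decomp (mC_herm sB).
have bj j : b 0 j = qf (mC B) (row j V) by rewrite eB qf_row.
have rowV0 j : row j V != 0.
  apply/negP => /eqP r0; have := qf1_row j uV.
  by rewrite r0 /qf !mul0mx mxE => /esym/eqP; rewrite oner_eq0.
have b_gt0 j : 0 < b 0 j by rewrite bj (lt_le_trans (h1 _ (rowV0 j)) (h2 _)).
have b_le1 j : b 0 j <= 1 by rewrite bj -(qf1_row j uV) h3.
pose br j := complex.Re (b 0 j).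
have bE j : b 0 j = iota (br j) by apply/nnegC/ltW.
have br_gt0 j : 0 < br j.
  by have := b_gt0 j; rewrite bE -(rmorph0 iota) ltcR.
have br_le1 j : br j <= 1.
  by have := b_le1 j; rewrite bE -(rmorph1 iota) lecR.
pose s := \row_j iota ((Num.sqrt (br j))^-1).
pose G := diag_mx s *m V.
have sreal : (diag_mx s) ^t* = diag_mx s.
  by rewrite tr_diag_mx map_diag_mx; congr diag_mx; apply/rowP => j; rewrite !mxE; exact: conjCR.
have Gt : G ^t* = V ^t* *m diag_mx s by rewrite /G trmx_mul map_mxM sreal.
have ss j : s 0 j * (b 0 j * s 0 j) = 1.
  rewrite !mxE bE -!rmorphM -(rmorph1 iota); congr iota.
  have sq0 : Num.sqrt (br j) != 0 by rewrite sqrtr_eq0 -ltNge br_gt0.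
  rewrite -{2}(sqr_sqrtr (ltW (br_gt0 j))); field.
  exact: sq0.
have GBG : G *m mC B *m G ^t* = 1%:M.
  rewrite Gt eB /G -!mulmxA [V *m (V ^t* *m _)]mulmxA unitary_r // mul1mx.
  rewrite [V *m (V ^t* *m _)]mulmxA unitary_r // mul1mx !mulmx_diag.
  rewrite -diag_const_mx; congr diag_mx; apply/rowP => j; rewrite !mxE.
  by have := ss j; rewrite !mxE.
have HE : G *m G ^t* = diag_mx (\row_j (s 0 j * s 0 j)).
  by rewrite Gt /G -mulmxA [V *m _]mulmxA unitary_r // mul1mx mulmx_diag.
clearbody G.
have [uGB uGt] := mulmx1_unit GBG.
have uG : G \in unitmx by move: uGB; rewrite unitmx_mul => /andP[].
have cancelG X : invmx G *m (G *m X *m G ^t*) *m invmx (G ^t*) = X.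
  by rewrite !mulmxA (mulVmx uG) mul1mx -mulmxA (mulmxV uGt) mulmx1.
have [C0 C0E] : {C0 | C0 = G *m mC A *m G ^t*} by eexists.
have hC0 : C0 \is hermsymmx.
  apply/is_hermitianmxP; rewrite expr0 scale1r C0E !trmx_mul !map_mxM.
  by rewrite trmxCK mC_tC // mulmxA.
have [W [c [uW _ eC]]] := herm_decomp hC0.
have qfC u : qf C0 u = qf (mC A) (u *m G) by rewrite C0E qf_conj.
have qfBG u : qf (mC B) (u *m G) = qf 1%:M u by rewrite -qf_conj GBG.
have rowWG0 j : row j W *m G != 0.
  apply/negP => /eqP r0; have : row j W = 0.
    by rewrite -(mulmxK uG (row j W)) r0 mul0mx.
  move=> r0'; have := qf1_row j uW.
  by rewrite r0' /qf !mul0mx mxE => /esym/eqP; rewrite oner_eq0.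
have cj j : c 0 j = qf C0 (row j W) by rewrite eC qf_row.
have c_gt0 j : 0 < c 0 j by rewrite cj qfC h1.
have c_le1 j : c 0 j <= 1.
  by rewrite cj qfC (le_trans (h2 _)) // qfBG qf1_row.
pose cr j := complex.Re (c 0 j).
have cE j : c 0 j = iota (cr j) by apply/nnegC/ltW.
have cr_gt0 j : 0 < cr j.
  by have := c_gt0 j; rewrite cE -(rmorph0 iota) ltcR.
have cr_le1 j : cr j <= 1.
  by have := c_le1 j; rewrite cE -(rmorph1 iota) lecR.
pose g j := (W *m (G *m G ^t*) *m W ^t*) j j.
have g_ge1 j : 1 <= g j.
  rewrite /g -qf_rowE HE -(qf1_row j uW) -[X in X <= _]mul1r.
  apply: qf_diag_ge => k; rewrite !mxE -rmorphM -(rmorph1 iota) lecR.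
  by rewrite -invfM -expr2 sqr_sqrtr ?invf_ge1 // ltW.
pose gr j := complex.Re (g j).
have gE j : g j = iota (gr j) by apply/nnegC/(le_trans ler01).
have gr_ge1 j : 1 <= gr j.
  by have := g_ge1 j; rewrite gE -(rmorph1 iota) lecR.
have dC0 : \det C0 = \prod_j c 0 j by rewrite eC det_decomp.
have dB : \det (mC B) = \prod_j b 0 j by rewrite eB det_decomp.
have detB : \det B = \prod_j br j.
  apply: (@complexI R); rewrite -mC_det dB rmorph_prod.
  by apply: eq_bigr => j _; rewrite bE.
have detA : \det A = \prod_j cr j * \prod_j br j.
  apply: (@complexI R); rewrite -mC_det rmorphM !rmorph_prod.
  rewrite -(eq_bigr _ (fun j _ => cE j)) -(eq_bigr _ (fun j _ => bE j)).
  rewrite -dC0 -dB.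
  have e1 : \det C0 = \det G * \det (mC A) * \det (G ^t*) by rewrite C0E !det_mulmx.
  have e2 : \det G * \det (mC B) * \det (G ^t*) = 1 by rewrite -!det_mulmx GBG det1.
  rewrite e1; transitivity (\det (mC A) * (\det G * \det (mC B) * \det (G ^t*))).
    by rewrite e2 mulr1.
  ring.
have c0 j : c 0 j != 0 by rewrite gt_eqF.
have uC0 : C0 \in unitmx.
  by rewrite unitmxE unitfE dC0; apply/prodf_neq0 => j _.
have uA : mC A \in unitmx.
  by move: uC0; rewrite C0E !unitmx_mul => /andP[/andP[]].
have invA : invmx (mC A) = G ^t* *m invmx C0 *m G.
  have mAE : mC A = invmx G *m C0 *m invmx (G ^t*) by rewrite C0E cancelG.
  apply: inv_unique; rewrite {1}mAE -!mulmxA (mulKmx uGt).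
  by rewrite (mulKVmx uC0) (mulVmx uG).
have invB : invmx (mC B) = G ^t* *m G.
  apply: inv_unique; rewrite -[mC B](cancelG) GBG mulmx1 -mulmxA (mulKmx uGt).
  by rewrite (mulVmx uG).
have trA : \tr (invmx (mC A)) = \sum_j (c 0 j)^-1 * g j.
  rewrite invA eC inv_decomp //.
  have -> : G ^t* *m (W ^t* *m diag_mx (\row_j (c 0 j)^-1) *m W) *m G =
    (G ^t* *m W ^t*) *m (diag_mx (\row_j (c 0 j)^-1) *m (W *m G)) by rewrite !mulmxA.
  rewrite mxtrace_mulC -mulmxA tr_diag_mul; apply: eq_bigr => j _.
  by rewrite /g !mulmxA; congr (_ * _); rewrite mxE.
have trB : \tr (invmx (mC B)) = \sum_j g j.
  rewrite invB mxtrace_mulC.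
  have -> : \tr (G *m G ^t*) = \tr (W *m (G *m G ^t*) *m W ^t*).
    by symmetry; rewrite -mulmxA mxtrace_mulC -mulmxA unitary_l // mulmx1.
  by [].
have trAr : \tr (invmx A) = \sum_j (cr j)^-1 * gr j.
  apply: (@complexI R); rewrite -mC_tr -mC_inv trA rmorph_sum.
  by apply: eq_bigr => j _; rewrite rmorphM fmorphV cE gE.
have trBr : \tr (invmx B) = \sum_j gr j.
  apply: (@complexI R); rewrite -mC_tr -mC_inv trB rmorph_sum.
  by apply: eq_bigr => j _; rewrite gE.
pose t j := ln (cr j) + gr j * ((cr j)^-1 - 1).
have PhiE : Phi A = Phi B + \sum_j t j.
  have ts : \sum_j t j = \sum_j ln (cr j) + \sum_j (cr j)^-1 * gr j - \sum_j gr j.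
    rewrite -big_split -sumrB; apply: eq_bigr => j _; rewrite /t /=; ring.
  rewrite ts /Phi detA detB trAr trBr lnM ?ln_prod //; last 2 first.
  - by apply: prodr_gt0.
  - by apply: prodr_gt0.
  ring.
have t_ge0 j : 0 <= t j by have [] := key (cr_gt0 j) (cr_le1 j) (gr_ge1 j).
rewrite PhiE lerDl sumr_ge0 //; split => // AB.
have [j cj1] : exists j, cr j < 1.
  apply/existsP; apply: contraR AB; rewrite negb_exists => /forallP allc.
  have c1 : c = const_mx 1.
    apply/rowP => j; rewrite mxE cE -(rmorph1 iota); congr iota.
    by apply/eqP; rewrite eq_le cr_le1 leNgt allc.
  have : G *m mC A *m G ^t* = G *m mC B *m G ^t* by rewrite GBG -C0E eC c1 decomp1.
  move=> /(congr1 (fun X => invmx G *m X *m invmx (G ^t*))); rewrite !cancelG.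
  by move=> /map_mx_inj ->.
rewrite ltrDl (bigD1 j) //=.
have [_ tj] := key (cr_gt0 j) (cr_le1 j) (gr_ge1 j).
by apply: (lt_le_trans (tj cj1)); rewrite lerDl sumr_ge0.
Qed.


Lemma realC (z : C) : z \is Num.real -> z = iota (complex.Re z).
Proof.
rewrite realE => /orP[/nnegC //|]; case: z => a b.
by rewrite lecE => /andP[h _]; move: h => /= /eqP <-.
Qed.

Lemma eig_det n (M : 'M[R]_n) x : eigenvalue M x = (\det (x%:M - M) == 0).
Proof.
apply/eigenvalueP/det0P=> [[v Av_av v_nz] | [v v_nz Av_av]]; exists v => //.
  by rewrite mulmxBr Av_av mul_mx_scalar subrr.
by apply/eqP; rewrite -mul_mx_scalar eq_sym -subr_eq0 -mulmxBr Av_av.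
Qed.

Lemma real_decomp n (M : 'M[R]_n) : M^T = M ->
  exists U : 'M[C]_n, exists r : 'I_n -> R,
   [/\ U \is unitarymx, mC M = U ^t* *m diag_mx (\row_j iota (r j)) *m U &
       forall x, eigenvalue M x <-> exists j, x = r j].
Proof.
move=> sM; have [U [d [uU dr eM]]] := herm_decomp (mC_herm sM).
pose r j := complex.Re (d 0 j).
have dE : d = \row_j iota (r j) by apply/rowP => j; rewrite mxE -realC.
exists U, r; split => //; first by rewrite eM dE.
move=> x; rewrite eig_det.
have -> : (\det (x%:M - M) == 0) = (iota (\det (x%:M - M)) == 0).
  by rewrite fmorph_eq0.
rewrite -mC_det /mC map_mxB map_scalar_mx -/(mC M) eM.
have -> : (iota x)%:M - U ^t* *m diag_mx d *m U =
          U ^t* *m diag_mx (const_mx (iota x) - d) *m U.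
  rewrite linearB /= diag_const_mx mulmxBr mulmxBl; congr (_ - _).
  by rewrite -mulmxA -scalar_mxC mulmxA unitary_l // mul1mx.
rewrite det_decomp //; split.
  move=> /prodf_eq0 [j _]; rewrite !mxE subr_eq0 dE mxE => /eqP e.
  by exists j; apply: complexI.
move=> [j ->]; apply/prodf_eq0; exists j => //.
by rewrite !mxE dE mxE subrr.
Qed.

Lemma sqsum_gt0 n (v : 'rV[R]_n) : v != 0 -> 0 < (v *m v^T) 0 0.
Proof.
move=> v0; rewrite mxE lt_def sumr_ge0 ?andbT; last first.
  by move=> j _; rewrite mxE -expr2 sqr_ge0.
apply: contra v0; rewrite psumr_eq0 => [/allP H|j _]; last first.
  by rewrite mxE -expr2 sqr_ge0.
apply/eqP/rowP => j; have := H j (mem_index_enum j).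
by rewrite /= mxE -expr2 sqrf_eq0 mxE => /eqP.
Qed.

Lemma psd_eig n (M : 'M[R]_n) x : psd M -> eigenvalue M x -> 0 <= x.
Proof.
move=> pM /eigenvalueP [v vM v0]; have := pM v^T; rewrite trmxK vM -scalemxAl mxE.
by rewrite pmulr_lge0 // sqsum_gt0.
Qed.

Lemma psd_qf n (M : 'M[R]_n) : M^T = M -> psd M -> forall u, 0 <= qf (mC M) u.
Proof.
move=> sM pM u; have [U [r [uU eM eig]]] := real_decomp sM.
rewrite eM qf_decomp; apply: qf_diag_ge0 => j; rewrite mxE.
rewrite -(rmorph0 iota) lecR; apply: (psd_eig pM); apply/eig; by exists j.
Qed.

Lemma rayleigh n (M : 'M[R]_n) : M^T = M ->
  forall u, qf (mC M) u <= iota (lambda1 M) * qf 1%:M u.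
Proof.
move=> sM u; have [U [r [uU eM eig]]] := real_decomp sM.
rewrite eM qf_decomp -(qf1_unitary u uU); apply: qf_diag_le => j; rewrite mxE lecR.
have hs : has_sup [set a : R | eigenvalue M a].
  split; first by exists (r j); apply/eig; exists j.
  exists (\sum_k `|r k|) => a /eig [k ->].
  rewrite (le_trans (ler_norm _)) // (bigD1 k) //= lerDl sumr_ge0 //.
have := sup_upper_bound hs; apply; by apply/eig; exists j.
Qed.

Lemma qf_affine n (M : 'M[R]_n) t u :
  qf (mC (1%:M - t *: M)) u = qf 1%:M u - iota t * qf (mC M) u.
Proof. by rewrite /mC map_mxB map_mx1 map_mxZ qfB qfZ. Qed.

Lemma sym_affine n (M : 'M[R]_n) t : M^T = M -> (1%:M - t *: M)^T = 1%:M - t *: M.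
Proof. by move=> sM; rewrite linearB /= trmx1 linearZ /= sM. Qed.

End Real.

Lemma gammaE (R : realType) n (t : R) (P : 'M[R]_n) :
  gamma t P = (Phi (1%:M - t *: P) - n%:R) / 2.
Proof. by []. Qed.

Close Scope sesquilinear_scope.
Unset Implicit Arguments.
Set Strict Implicit.

Theorem proposition2 (R : realType) (n : nat) (P : 'M[R]_n) (theta : R) :
  sym_mx P -> psd P -> P != 0 ->
  0 < theta -> theta < (lambda1 P)^-1 ->
  (forall a b : R, 0 <= a -> a < b -> b < (lambda1 P)^-1 ->
     gamma a P < gamma b P) /\
  0 < gamma theta P /\
  (forall Q : 'M[R]_n, sym_mx Q -> psd Q -> loewner_ge P Q ->
     gamma theta Q <= gamma theta P).
Proof.
rewrite /sym_mx => sP pP P0 th0 thl.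
have l0 : 0 < lambda1 P.
  rewrite ltNge; apply/negP => l0; move: (lt_trans th0 thl).
  by rewrite ltNge invr_le0 l0.
pose iota := real_complex R.
have h1 t : 0 <= t -> t < (lambda1 P)^-1 -> forall u, u != 0 ->
    0 < qf (mC (1%:M - t *: P)) u.
  move=> t0 tl u u0; rewrite qf_affine subr_gt0.
  have q1 := qf1_gt0 u0.
  apply: (le_lt_trans (ler_wpM2l _ (rayleigh sP u))).
    by rewrite -(rmorph0 iota) lecR.
  rewrite mulrA -[X in _ < X]mul1r ltr_pM2r // -rmorphM -(rmorph1 iota) ltcR.
  by rewrite -ltr_pdivlMr // div1r.
have part1 : forall a b : R, 0 <= a -> a < b -> b < (lambda1 P)^-1 ->
     gamma a P < gamma b P.
  move=> a b a0 ab bl.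
  have b0 : 0 <= b by rewrite (le_trans a0) // ltW.
  have h2 : forall u, qf (mC (1%:M - b *: P)) u <= qf (mC (1%:M - a *: P)) u.
    move=> u; rewrite !qf_affine lerD2l lerN2 ler_wpM2r ?psd_qf //.
    by rewrite lecR ltW.
  have h3 : forall u, qf (mC (1%:M - a *: P)) u <= qf 1%:M u.
    move=> u; rewrite qf_affine gerBl mulr_ge0 ?psd_qf //.
    by rewrite -(rmorph0 iota) lecR.
  have [_ st] := main (sym_affine b sP) (sym_affine a sP) (h1 b b0 bl) h2 h3.
  rewrite !gammaE ltr_pM2r ?invr_gt0 // ltrD2r; apply: st.
  apply/negP => /eqP e.
  have : (b - a) *: P = (1%:M - a *: P) - (1%:M - b *: P).
    by rewrite scalerBl opprB [RHS]addrC [RHS]addrA subrK.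
  rewrite e subrr => /eqP; rewrite scaler_eq0 subr_eq0 (negbTE P0) orbF.
  by rewrite gt_eqF.
split => //; split.
  have := part1 0 theta (lexx 0) th0 thl.
  rewrite gammaE scale0r subr0 /Phi det1 ln1 invmx1 mxtrace1 add0r subrr mul0r.
  by [].
move=> Q sQ pQ PQ.
have sPQ : (P - Q)^T = P - Q by rewrite linearB /= sP sQ.
have h2 : forall u, qf (mC (1%:M - theta *: P)) u <= qf (mC (1%:M - theta *: Q)) u.
  move=> u; rewrite !qf_affine lerD2l lerN2 ler_wpM2l //.
    by rewrite -(rmorph0 iota) lecR ltW.
  by rewrite -subr_ge0 -qfB /mC -map_mxB psd_qf.
have h3 : forall u, qf (mC (1%:M - theta *: Q)) u <= qf 1%:M u.
  move=> u; rewrite qf_affine gerBl mulr_ge0 ?psd_qf //.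
  by rewrite -(rmorph0 iota) lecR ltW.
have [le _] := main (sym_affine theta sP) (sym_affine theta sQ)
  (h1 theta (ltW th0) thl) h2 h3.
by rewrite !gammaE ler_pM2r ?invr_gt0 // lerD2r.
Qed.
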